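(* For every integer $k\ge2$, the independent user partition multicast scheme is optimal for the $(k,2)$-GIC problem (defined in the context), i.e. $\beta_{IUPM}=\beta$, where $\beta$ is the optimal broadcast rate of that problem.
   Context: GIC problem: there are $m$ packets $x_1,\dots,x_m$, each a binary string of length $t$; for each $i\in[m]$ there is a nonempty set $U_i=\{u_i^1,\dots,u_i^{|U_i|}\}$ of users demanding $x_i$, $U=\bigcup_iU_i$; user $u_i^j$ knows the packets $x_{i'}$, $i'\in A_i^j\subseteq[m]\setminus\{i\}$. An index code of length $r$ for packet length $t$ is an encoder $\phi:(\{0,1\}^t)^m\to\{0,1\}^r$ with decoders $\psi_i^j$ recovering $x_i$ from $\phi(x_1,\dots,x_m)$ and $(x_{i'})_{i'\in A_i^j}$ for all packet values; $\beta=\inf_t\inf r/t$. IUPM rate: for a partition of $U$ into nonempty disjoint sets $W_1,\dots,W_h$ ($1\le h\le m$), let $Y_e=\{i:u_i^j\in W_e\text{ for some }j\}$, $c_e=\min\{|A_i^j\cap Y_e|:u_i^j\in W_e\}$, $b_e=|Y_e|-c_e$. Over a field $\mathbb F=GF(2^s)$ (packets viewed as vectors over $\mathbb F$, combinations componentwise), a valid coefficient choice gives, for each $e$, $b_e$ vectors $\alpha\in\mathbb F^m$ supported on $Y_e$ such that each user $u_i^j\in W_e$ can recover $x_i$ from the combinations $\sum_{i'}\alpha_{i'}x_{i'}$ and its side information. $\mathbf N$ is the matrix of all these vectors as rows; the IUPM rate of the partition is the minimum of $\operatorname{rank}\mathbf N$ over $s$ and valid choices, and $\beta_{IUPM}$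 is its minimum over all user partitions. The $(k,2)$-GIC problem: $m=k(k-1)/2$, $U_i=\{u_i^1,u_i^2\}$ for all $i$. For $l\in[k]$: $I_l^1=\{(l-1)k+a-\tfrac{l(l-1)}{2}: a=1,\dots,k-l\}$ ($l\ne k$), $I_k^1=\emptyset$; $I_l^2=\{(a-1)k+l-\tfrac{a(a+1)}{2}: a=1,\dots,l-1\}$ ($l\ne1$), $I_1^2=\emptyset$; $I_l=I_l^1\cup I_l^2$. User $u_i^j$ has $A_i^j=I_l\setminus\{i\}$ where $l$ is the index with $i\in I_l^j$. *)

(* Defs.v *)
From HB Require Import structures.
From mathcomp Require Import all_boot all_order all_algebra.
From mathcomp Require Import classical_sets reals.
Set Implicit Arguments. Unset Strict Implicit. Unset Printing Implicit Defensive.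
Import Order.TTheory GRing.Theory Num.Theory.
Local Open Scope ring_scope.

(* Packets are indexed by 'I_gm (packet i of the paper is ordinal i-1).
   Users form a finite type; user u demands packet gdem u and knows the
   packets in gside u. *)
Record gic := Gic {
  gm : nat;
  guser : finType;
  gdem : guser -> 'I_gm;
  gside : guser -> {set 'I_gm} }.
Arguments gdem {g}.
Arguments gside {g}.

Definition bits (t : nat) := {ffun 'I_t -> bool}.
Definition packets (G : gic) (t : nat) := {ffun 'I_(gm G) -> bits t}.

Definition mask (G : gic) (t : nat) (A : {set 'I_(gm G)}) (x : packets G t)
  : packets G t := [ffun i => if i \in A then x i else [ffun => false]].

Definition is_index_code (G : gic) (t r : nat) (phi : packets G t -> bits r) :=
  exists psi : guser G -> bits r -> packets G t -> bits t,
    forall (u : guser G) (x : packets G t),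
      psi u (phi x) (mask (gside u) x) = x (gdem u).

Definition has_index_code (G : gic) (t r : nat) :=
  exists phi : packets G t -> bits r, is_index_code phi.

Definition beta (R : realType) (G : gic) : R :=
  inf [set q : R | exists t r : nat,
         (0 < t)%N /\ has_index_code G t r /\ q = (r%:R / t%:R)%R].

Definition Yset (G : gic) (W : {set guser G}) : {set 'I_(gm G)} := gdem @: W.
(* c_e = min over users of W of |A_u :&: Y_e|; the seed #|Y_e| is an upper
   bound of all terms, so for nonempty W this is exactly the minimum. *)
Definition cval (G : gic) (W : {set guser G}) : nat :=
  \big[minn/#|Yset W|]_(u in W) #|gside u :&: Yset W|.
Definition bval (G : gic) (W : {set guser G}) : nat := (#|Yset W| - cval W)%N.

(* A valid coefficient choice over F for partition P: for each block W,
   b_W row vectors (rows of M W) supported on Y_W, from whose combinations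
   (M W *m x) and its side information every user of W recovers its packet. *)
Definition iupm_valid (F : fieldType) (G : gic) (P : {set {set guser G}})
  (M : forall W : {set guser G}, 'M[F]_(bval W, gm G)) : Prop :=
  forall W, W \in P ->
    (forall (j : 'I_(bval W)) (i : 'I_(gm G)), i \notin Yset W -> M W j i = 0%R)
    /\ (forall u, u \in W ->
         exists dec : 'cV[F]_(bval W) -> 'cV[F]_(gm G) -> F,
           forall x : 'cV[F]_(gm G),
             dec (M W *m x) (\col_i (if i \in gside u then x i 0 else 0%R))
               = x (gdem u) 0).

(* rank of N (all rows of all blocks stacked) = rank of the sum of the
   row spaces of the blocks *)
Definition iupm_rank (F : fieldType) (G : gic) (P : {set {set guser G}})
  (M : forall W : {set guser G}, 'M[F]_(bval W, gm G)) : nat :=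
  \rank (\sum_(W in P) <<M W>>)%MS.

Definition iupm_achievable (G : gic) (P : {set {set guser G}}) (n : nat) : Prop :=
  exists (F : finFieldType) (s : nat), (0 < s)%N /\ #|F| = (2 ^ s)%N /\
    exists M : forall W : {set guser G}, 'M[F]_(bval W, gm G),
      iupm_valid P M /\ iupm_rank P M = n.

Definition beta_IUPM (R : realType) (G : gic) : R :=
  inf [set q : R | exists (P : {set {set guser G}}) (n : nat),
         finset.partition P [set: guser G] /\ (0 < #|P| <= gm G)%N /\
         iupm_achievable P n /\ q = (n%:R)%R].

(* 1-based index sets of the paper *)
Definition I1 (k l : nat) : seq nat :=
  if (l != k) then [seq ((l - 1) * k + a - l * (l - 1) %/ 2)%N | a <- iota 1 (k - l)]
  else [::].
Definition I2 (k l : nat) : seq nat :=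
  if (l != 1) then [seq ((a - 1) * k + l - a * (a + 1) %/ 2)%N | a <- iota 1 (l - 1)]
  else [::].
(* j : 'I_2 encodes the superscript (0 -> I^1, 1 -> I^2) *)
Definition Ij (k l : nat) (j : 'I_2) : seq nat := if val j == 0%N then I1 k l else I2 k l.
Definition Il (k l : nat) : seq nat := I1 k l ++ I2 k l.

Definition km (k : nat) : nat := (k * (k - 1) %/ 2)%N.

(* user u_i^j = (i, j); A_i^j = I_l \ {i} where i \in I_l^j, l in [k] *)
Definition kside (k : nat) (u : ('I_(km k) * 'I_2)%type) : {set 'I_(km k)} :=
  [set i' : 'I_(km k) | (i' != u.1) &&
     [exists l : 'I_k.+1, [&& (0 < val l)%N, (u.1.+1 \in Ij k l u.2)
                            & (i'.+1 \in Il k l)]]].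

Definition kgic (k : nat) : gic :=
  @Gic (km k) ('I_(km k) * 'I_2)%type (fun u => u.1) (@kside k).

(* Main.v *)
Require Import Defs.
From HB Require Import structures.
From mathcomp Require Import all_boot all_order all_algebra.
From mathcomp Require Import classical_sets reals.
From mathcomp Require Import zify ring.
Set Implicit Arguments. Unset Strict Implicit. Unset Printing Implicit Defensive.
Import Order.TTheory GRing.Theory Num.Theory.
Import Defs.

Section SA.

Fixpoint sr (k n : nat) : nat := if n is n'.+1 then sr k n' + (k - n) else 0.

Lemma sr_mono k a b : a <= b -> sr k a <= sr k b.
Proof.
move=> /subnK <-; elim: (b - a) => [|d IH] //.
rewrite addSn /=; exact: leq_trans IH (leq_addr _ _).
Qed.

Lemma sr_uniq k b b' o o' : 0 < o <= k - b.+1 -> 0 < o' <= k - b'.+1 ->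
  sr k b + o = sr k b' + o' -> b = b' /\ o = o'.
Proof.
have key : forall b b' o o', 0 < o <= k - b.+1 -> 0 < o' <= k - b'.+1 -> b < b' ->
   sr k b + o < sr k b' + o'.
  move=> c c' p p' /andP[h1 h2] /andP[h3 h4] hc.
  have := sr_mono k hc; rewrite /=; lia.
move=> h h' e; case: (ltngtP b b') => hb.
- by have := key _ _ _ _ h h' hb; rewrite e ltnn.
- by have := key _ _ _ _ h' h hb; rewrite e ltnn.
- subst; split => //; lia.
Qed.

Lemma bin2_dbl n : 'C(n, 2) * 2 = n * n.-1.
Proof.
elim: n => [|n IH] //; rewrite binS bin1 mulnDl IH /=.
case: n {IH} => [|n] //=; nia.
Qed.

Lemma bin2S n : 'C(n.+1, 2) = 'C(n, 2) + n.
Proof. by rewrite binS bin1. Qed.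

Lemma sr_bin k n : n < k -> 'C(n.+1, 2) + sr k n = n * k.
Proof.
elim: n => [|n IH] hn //=.
rewrite bin2S; have := IH (ltnW hn); nia.
Qed.

Lemma I1P k n p : (p \in I1 k n.+1) = [&& n.+1 < k, sr k n < p & p <= sr k n + (k - n.+1)].
Proof.
rewrite /I1; case: eqP => [->|hk] /=; first by rewrite ltnn.
case: (ltnP n.+1 k) => hnk /=; last first.
  by have -> : k - n.+1 = 0 by lia.
have hC : n.+1 * (n.+1 - 1) %/ 2 = 'C(n.+1, 2) by rewrite bin2 divn2 subn1.
have hs := @sr_bin k n (ltnW hnk).
rewrite hC; have -> : n.+1 - 1 = n by lia.
apply/mapP/idP.
- move=> [a]; rewrite mem_iota => ha ->; lia.
- move=> hp; exists (p - sr k n); first by rewrite mem_iota; lia.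
  lia.
Qed.

Lemma I2P k n p : n.+1 <= k ->
  reflect (exists2 b, b < n & p = sr k b + (n - b)) (p \in I2 k n.+1).
Proof.
move=> hnk; rewrite /I2; case: n hnk => [|n] hnk.
  by rewrite /= in_nil; constructor => -[].
rewrite (_ : (n.+2 != 1%R) = true) // subSS subn0.
apply: (iffP mapP).
- move=> [a]; rewrite mem_iota => ha ->.
  case: a ha => [|b] hb; first lia.
  exists b; first lia.
  have hC : b.+1 * (b.+1 + 1) %/ 2 = 'C(b.+1, 2) + b.+1.
    by rewrite -bin2S bin2 divn2 addn1 mulnC.
  have hs := sr_bin (_ : b < k); rewrite hC subSS subn0; have := hs ltac:(lia); lia.
- move=> [b hb ->]; exists b.+1; first by rewrite mem_iota; lia.
  have hC : b.+1 * (b.+1 + 1) %/ 2 = 'C(b.+1, 2) + b.+1.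
    by rewrite -bin2S bin2 divn2 addn1 mulnC.
  have hs := sr_bin (_ : b < k); rewrite hC subSS subn0; have := hs ltac:(lia); lia.
Qed.

Lemma sr_ex k N p : 0 < p <= sr k N -> exists2 b, b < N & sr k b < p <= sr k b.+1.
Proof.
elim: N => [|N IH] /=; first lia.
move=> hp; case: (leqP p (sr k N)) => h.
  have [b hb hb'] := IH ltac:(lia); exists b => //; lia.
exists N => //=; lia.
Qed.

Lemma km_sr k : 0 < k -> km k = sr k k.-1.
Proof.
move=> hk; have h1 := @sr_bin k k.-1 ltac:(lia).
have h2 := bin2_dbl k.
have hC : km k = 'C(k, 2) by rewrite /km bin2 divn2 subn1.
rewrite hC; move: h1; rewrite prednK //; nia.
Qed.

Lemma pack_rep k (i : 'I_(km k)) :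
  exists b o, [/\ b.+1 < k, 0 < o <= k - b.+1 & i.+1 = sr k b + o].
Proof.
have hk : 0 < k by case: k i => // -[m hm]; move: hm; rewrite /km.
have hi : i < sr k k.-1 by rewrite -km_sr.
have [b hb hb'] := @sr_ex k k.-1 i.+1 ltac:(lia).
exists b, (i.+1 - sr k b); split; [lia| |lia].
move: hb' => /=; lia.
Qed.

Section Rep.
Variables (k b o p : nat).
Hypotheses (hb : b.+1 < k) (ho : 0 < o <= k - b.+1) (hp : p = sr k b + o).

Lemma repI1 n : (p \in I1 k n.+1) = (n == b).
Proof.
rewrite I1P; apply/idP/eqP => [/and3P[h1 h2 h3]|->].
- have [] := @sr_uniq k n b (p - sr k n) o ltac:(lia) ho ltac:(lia) => //.
- apply/and3P; split; lia.
Qed.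

Lemma repI2 n : n.+1 <= k -> (p \in I2 k n.+1) = (n == b + o).
Proof.
move=> hn; apply/(I2P _ hn)/eqP => [[b' hb' e]|->].
- have [] := @sr_uniq k b' b (n - b') o ltac:(lia) ho ltac:(lia) => //; lia.
- exists b; lia.
Qed.

Lemma repIl n : n.+1 <= k -> (p \in Il k n.+1) = (n == b) || (n == b + o).
Proof. by move=> hn; rewrite /Il mem_cat repI1 repI2. Qed.
End Rep.

End SA.

Section SB.

Section K.
Variable k : nat.
Definition Wl (l : nat) : {set 'I_(km k) * 'I_2} :=
  [set u : 'I_(km k) * 'I_2 | (val u.1).+1 \in Ij k l u.2].

Lemma memIl (i : 'I_(km k)) n b o : b.+1 < k -> 0 < o <= k - b.+1 -> i.+1 = sr k b + o ->
  n.+1 <= k -> (i.+1 \in Il k n.+1) = (n == b) || (n == b + o).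
Proof. by move=> hb ho hi hn; rewrite (repIl hb ho hi). Qed.

Lemma memW (u : 'I_(km k) * 'I_2) n b o : b.+1 < k -> 0 < o <= k - b.+1 ->
  u.1.+1 = sr k b + o -> n.+1 <= k ->
  (u \in Wl n.+1) = if val u.2 == 0 then n == b else n == b + o.
Proof.
move=> hb ho hi hn; rewrite inE /Ij.
by case: ifP => _; [rewrite (repI1 hb ho hi) | rewrite (repI2 hb ho hi)].
Qed.

Lemma W_uniq u l l' : 0 < l <= k -> 0 < l' <= k -> u \in Wl l -> u \in Wl l' -> l = l'.
Proof.
case: l => // n /andP[_ hn]; case: l' => // n' /andP[_ hn'].
have [b [o [hb ho hi]]] := pack_rep u.1.
rewrite (memW hb ho hi hn) (memW hb ho hi hn').
by case: ifP => _ /eqP -> /eqP ->.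
Qed.

Lemma W_cover u : exists2 l, 0 < l <= k & u \in Wl l.
Proof.
have [b [o [hb ho hi]]] := pack_rep u.1.
case: (boolP (val u.2 == 0)) => hj.
- exists b.+1; first lia.
  by rewrite (memW hb ho hi (ltnW hb)) hj.
- exists (b + o).+1; first lia.
  have hbo : (b + o).+1 <= k by lia.
  by rewrite (memW hb ho hi hbo) (negbTE hj) eqxx.
Qed.

Lemma kside_W u l : 0 < l <= k -> u \in Wl l ->
  kside u = [set i' | (i' != u.1) && (i'.+1 \in Il k l)].
Proof.
move=> hl hu; apply/setP => i'; rewrite !inE; congr (_ && _).
apply/existsP/idP.
- move=> [l' /and3P[hl' h1 h2]].
  have hu' : u \in Wl l' by rewrite inE.
  have hl'k : 0 < l' <= k by rewrite hl' -ltnS ltn_ord.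
  by rewrite (W_uniq hl hl'k hu hu').
- move=> h; have hlk : l < k.+1 by lia.
  exists (Ordinal hlk); rewrite /= h andbT; apply/andP; split; first lia.
  by move: hu; rewrite inE.
Qed.

Lemma Yset_W l : Yset (G := kgic k) (Wl l) = [set i : 'I_(km k) | (val i).+1 \in Il k l].
Proof.
apply/setP => i; rewrite inE; apply/imsetP/idP.
- move=> [u]; rewrite inE /Ij /Il mem_cat => h ->.
  by move: h; case: ifP => _ ->; rewrite ?orbT.
- rewrite /Il mem_cat => /orP[h|h].
  + by exists (i, ord0); rewrite // inE.
  + by exists (i, Ordinal (isT : 1 < 2)); rewrite // inE.
Qed.

Lemma small_rep (j : 'I_(km k)) : j < k.-1 -> j.+1 = sr k 0 + j.+1.
Proof. by []. Qed.

Lemma side_small (j i : 'I_(km k)) : j < k.-1 ->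
  i \in kside (j, Ordinal (isT : 1 < 2)) -> k.-1 <= i.
Proof.
move=> hj; rewrite inE => /andP[hij /existsP[[[|n] hn] /and3P[/= _ h1 h2]]] //.
rewrite /Ij /= in h1.
have hb : 0 < k by lia.
have ho : 0 < j.+1 <= k - 1 by lia.
rewrite (repI2 (_ : 1 < k) _ (erefl _)) ?add0n in h1; [|lia|lia|lia].
rewrite leqNgt; apply/negP => hi.
rewrite (repIl (_ : 1 < k) (_ : 0 < i.+1 <= k - 1) (erefl _)) ?add0n in h2; [|lia|lia|lia].
move: h1 h2 hij => /eqP -> /orP[//|/eqP [] /val_inj ->]; by rewrite eqxx.
Qed.
End K.

End SB.

Section SC.
Local Open Scope ring_scope.

Lemma inf_eq (R : realType) (E : set R) x : E x -> (forall y, E y -> (x <= y)%R) -> inf E = x.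
Proof.
move=> hx hlb; apply/le_anti/andP; split.
- by apply: (ge_inf (ex_intro _ x hlb)).
- by apply: lb_le_inf => //; exists x.
Qed.

Lemma card_bij (A B : finType) : #|A| = #|B| ->
  exists f : A -> B, exists g : B -> A, cancel f g /\ cancel g f.
Proof.
move=> h.
exists (fun a => enum_val (cast_ord h (enum_rank a))),
       (fun b => enum_val (cast_ord (esym h) (enum_rank b))).
by split => x; rewrite enum_valK ?cast_ordK ?cast_ordKV enum_rankK.
Qed.

Lemma code_of_iupm (G : gic) P n : finset.partition P [set: guser G] ->
  iupm_achievable P n -> exists2 s, (0 < s)%N & has_index_code G s (n * s)%N.
Proof.
move=> hP [F [s [hs [hF [M [hv hr]]]]]].
exists s => //; subst n.
rewrite /iupm_rank.
set S := (\sum_(W in P) <<M W>>)%MS.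
have hcov : finset.cover P = [set: guser G] by case/and3P: hP => /eqP.
have hcard1 : #|{: bits s}| = #|F| by rewrite card_ffun card_bool card_ord hF.
have [toF [ofF [c1 c2]]] := card_bij hcard1.
have hcard2 : #|{: 'cV[F]_(\rank S)}| = #|{: bits (\rank S * s)}|.
  by rewrite card_mx card_ffun card_bool card_ord hF muln1 -expnM mulnC.
have [enc [decd [c3 c4]]] := card_bij hcard2.
have hdec : forall u, exists dec : 'cV[F]_(bval (finset.pblock P u)) -> 'cV[F]_(gm G) -> F,
   forall x, dec (M (finset.pblock P u) *m x) (\col_i (if i \in gside u then x i 0 else 0))%R
     = x (gdem u) 0.
  move=> u; have hu : u \in finset.cover P by rewrite hcov inE.
  have [_ ] := hv _ (pblock_mem hu); apply; by rewrite mem_pblock.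
have [dec hdecP] := fin_all_exists hdec.
pose xv (x : packets G s) : 'cV[F]_(gm G) := (\col_i toF (x i))%R.
pose B := row_base S.
exists (fun x => enc (B *m xv x))%R.
exists (fun u c xm => ofF (dec u (M (finset.pblock P u) *m pinvmx B *m decd c)
          (\col_i (if i \in gside u then toF (xm i) else 0))))%R.
move=> u x.
have hu : u \in finset.cover P by rewrite hcov inE.
have hsub : (M (finset.pblock P u) <= B)%MS.
  rewrite eq_row_base -genmxE; exact: (sumsmx_sup (finset.pblock P u)) (pblock_mem hu) _.
rewrite c3 [in X in dec _ X _]mulmxA mulmxKpV //.
have -> : (\col_i (if i \in gside u then toF (mask (gside u) x i) else 0)
          = \col_i (if i \in gside u then xv x i 0 else 0) :> 'cV[F]_(gm G))%R.
  apply/colP => i; rewrite !mxE /mask ffunE; by case: (i \in gside u).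
by rewrite hdecP mxE c1.
Qed.

Definition Mgen (F : fieldType) (G : gic) (W : {set guser G}) : 'M[F]_(bval W, gm G) :=
  (\matrix_(j < bval W, i < gm G) ((i \in Yset W)%:R))%R.

Definition good (G : gic) (W : {set guser G}) :=
  (exists u, u \in W) /\
  (forall u i, u \in W -> i \in Yset W -> (i \in gside u) = (i != gdem u)).

Lemma bval_good (G : gic) (W : {set guser G}) : good W -> bval W = 1%N.
Proof.
move=> [[u0 hu0] hg].
have hY : forall u, u \in W -> gdem u \in Yset W by move=> u hu; apply: imset_f.
have hc : forall u, u \in W -> #|gside u :&: Yset W| = (#|Yset W| - 1)%N.
  move=> u hu; rewrite (cardsD1 (gdem u) (Yset W)) hY //.
  have -> : gside u :&: Yset W = Yset W :\ gdem u.
    apply/setP => i; rewrite !inE; case hi: (i \in Yset W); last by rewrite !andbF.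
    by rewrite hg.
  by rewrite add1n subn1.
have hpos : (0 < #|Yset W|)%N by apply/card_gt0P; exists (gdem u0); apply: hY.
have hcv : cval W = (#|Yset W| - 1)%N.
  rewrite /cval (eq_bigr (fun _ => (#|Yset W| - 1)%N)); last by move=> u hu; rewrite hc.
  rewrite big_const.
  have hW : #|W| = (#|W|.-1).+1 by rewrite prednK // card_gt0; apply/set0Pn; exists u0.
  rewrite hW; elim: (#|W|.-1) => [|n IH]; first by rewrite /= (minn_idPl (leq_subr _ _)).
  by rewrite iterS IH minnn.
rewrite /bval hcv; lia.
Qed.

Lemma valid_gen (F : fieldType) (G : gic) (P : {set {set guser G}}) :
  (forall W, W \in P -> good W) -> iupm_valid P (@Mgen F G).
Proof.
move=> hP W hW; have hgW := hP W hW; have hb := bval_good hgW.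
case: hgW => _ hg; split.
  by move=> j i hi; rewrite mxE (negbTE hi).
move=> u hu.
exists (fun y xs => y (cast_ord (esym hb) ord0) 0 - \sum_i ((i \in Yset W)%:R * xs i 0))%R.
move=> x; rewrite !mxE.
have hY : gdem u \in Yset W by apply: imset_f.
rewrite [X in (_ - X)%R](eq_bigr (fun i => (((i \in Yset W) && (i != gdem u))%:R * x i 0)%R)); last first.
  move=> i _; rewrite mxE; case hi: (i \in Yset W); last by rewrite !mul0r.
  by rewrite hg //=; case: eqP => _; rewrite ?mul0r ?mul1r.
rewrite [X in (X - _)%R](eq_bigr (fun j => ((j \in Yset W)%:R * x j 0)%R)); last first.
  by move=> j _; rewrite mxE.
rewrite [X in (X - _)%R](bigD1 (gdem u)) //= [X in (_ - X)%R](bigD1 (gdem u)) //= hY eqxx /=.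
rewrite [X in (_ - (_ + X))%R](eq_bigr (fun i => ((i \in Yset W)%:R * x i 0)%R)); last first.
  by move=> i hi; rewrite hi andbT.
ring.
Qed.

Definition vrow (F : fieldType) (G : gic) (W : {set guser G}) : 'rV[F]_(gm G) :=
  (\row_i ((i \in Yset W)%:R))%R.

Lemma Mgen_sub (F : fieldType) (G : gic) (W : {set guser G}) :
  (@Mgen F G W <= vrow F W)%MS.
Proof.
apply/row_subP => j; rewrite (_ : row j _ = vrow F W) ?submx_refl //.
by apply/rowP => i; rewrite !mxE.
Qed.

Lemma rank_sums (F : fieldType) (I : finType) (P : pred I) n (A : I -> 'M[F]_n) :
  (\rank (\sum_(i | P i) A i)%MS <= \sum_(i | P i) \rank (A i))%N.
Proof.
elim/big_rec2: _ => [|i x y _ h]; first by rewrite mxrank0.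
apply: leq_trans (mxrank_adds_leqif _ _) _; by rewrite leq_add2l.
Qed.

End SC.

Section SD.

Lemma km_ge k : (2 <= k)%N -> (k.-1 <= km k)%N.
Proof.
move=> hk; rewrite km_sr; last lia.
have := @sr_mono k 1 k.-1 ltac:(lia); rewrite /=; lia.
Qed.

Lemma km_ge3 k : (3 <= k)%N -> (k <= km k)%N.
Proof.
move=> hk; rewrite km_sr; last lia.
have := @sr_mono k 2 k.-1 ltac:(lia); rewrite /=; lia.
Qed.

Lemma lb_code k t r : (2 <= k)%N -> has_index_code (kgic k) t r -> (k.-1 * t <= r)%N.
Proof.
move=> hk [phi [psi hpsi]].
have hkm := km_ge hk.
pose emb (y : {ffun 'I_k.-1 -> bits t}) : packets (kgic k) t :=
  [ffun i : 'I_(km k) => odflt [ffun => false] (omap y (insub (val i)))].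
have inj : injective (fun y => phi (emb y)).
  move=> y z e; apply/ffunP => j.
  have hj : (j < km k)%N by apply: leq_trans (ltn_ord j) hkm.
  pose u : guser (kgic k) := (Ordinal hj, Ordinal (isT : (1 < 2)%N)).
  have hm : mask (gside u) (emb y) = mask (gside u) (emb z).
    apply/ffunP => i'; rewrite !ffunE; case: ifP => // hi'.
    have := @side_small k (Ordinal hj) i' (ltn_ord j) hi' => hle.
    by rewrite insubN // -leqNgt.
  have := hpsi u (emb y); rewrite e hm hpsi /= !ffunE.
  have -> : insub (val (Ordinal hj)) = Some j by rewrite /= valK.
  by move=> /= ->.
have := @leq_card _ _ _ inj; rewrite !card_ffun !card_bool !card_ord -expnM.
by rewrite leq_exp2l // mulnC.
Qed.

Local Open Scope ring_scope.

Lemma sum_eq_nat (R : nzRingType) N c :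
  \sum_(i < N) (((val i == c) : nat)%:R : R) = ((c < N)%N : nat)%:R.
Proof.
rewrite -(big_mkord xpredT (fun i => (((i == c) : nat)%:R : R))).
rewrite (eq_bigr (fun i => if i == c then 1 else 0)); last by move=> i _; case: eqP.
rewrite -big_mkcond big_nat1_eq /=; by case: ltnP.
Qed.

Section Scheme.
Variable k : nat.
Hypothesis hk : (2 <= k)%N.

Lemma good_W (l : nat) : (l < k)%N -> good (G := kgic k) (Wl k l.+1).
Proof.
move=> hl; split.
- case: l hl => [|n] hl.
  + have h0 : (0 < km k)%N by have := km_ge hk; lia.
    pose u : 'I_(km k) * 'I_2 := (Ordinal h0, ord0).
    exists u.
    have e : (val u.1).+1 = (sr k 0 + 1)%N by [].
    rewrite (memW (_ : 1 < k)%N (_ : 0 < 1 <= k - 1)%N e) //; lia.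
  + have h0 : (n < km k)%N by have := km_ge hk; lia.
    pose u : 'I_(km k) * 'I_2 := (Ordinal h0, Ordinal (isT : (1 < 2)%N)).
    exists u.
    have e : (val u.1).+1 = (sr k 0 + n.+1)%N by [].
    rewrite (memW (_ : 1 < k)%N (_ : 0 < n.+1 <= k - 1)%N e) //=; lia.
- move=> u i hu hi; have := hi; rewrite Yset_W inE => hi'.
  have hl' : (0 < l.+1 <= k)%N by lia.
  by rewrite /= (kside_W hl' hu) inE hi' andbT.
Qed.

Definition vl (n : nat) : 'rV['F_2]_(km k) := \row_(c < km k) (((val c).+1 \in Il k n) : nat)%:R.

Lemma vl_k : vl k = \sum_(i < k.-1) vl (val i).+1.
Proof.
apply/rowP => c; rewrite !mxE summxE.
under eq_bigr do rewrite mxE.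
have [b [o [hb ho hc]]] := pack_rep c.
have -> : Il k k = Il k (k.-1).+1 by rewrite prednK //; lia.
rewrite (repIl hb ho hc); last by rewrite prednK //; lia.
rewrite (eq_bigr (fun i : 'I_k.-1 => ((val i == b) : nat)%:R + ((val i == (b + o)%N) : nat)%:R)); last first.
  move=> i _; rewrite (repIl hb ho hc); last by apply: leq_trans (ltn_ord i) (leq_pred _).
  rewrite -natrD; congr (_%:R).
  case: eqP => [->|_]; case: eqP => //; lia.
rewrite big_split /= !sum_eq_nat.
have -> : (k.-1 == b) = false by apply/eqP; lia.
have -> : (b < k.-1)%N = true by lia.
case: (ltngtP (b + o) k.-1) => h; try lia.
  by apply/val_inj.
- by apply/val_inj.
Qed.

Lemma scheme_gen : (3 <= k)%N -> exists P n,
  finset.partition P [set: guser (kgic k)] /\ (0 < #|P| <= gm (kgic k))%N /\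
  iupm_achievable P n /\ (n <= k.-1)%N.
Proof.
move=> h3.
pose P : {set {set guser (kgic k)}} := [set Wl k (val l).+1 | l : 'I_k].
have hgood : forall W, W \in P -> good W.
  by move=> W; rewrite /P => /imsetP[l _ ->]; exact: (good_W (ltn_ord l)).
exists P, (iupm_rank P (@Mgen 'F_2 (kgic k))).
split; [|split; [|split]].
- apply/and3P; split.
  + apply/eqP/setP => u; rewrite finset.in_setT; apply/finset.bigcupP.
    have [l hl hu] := W_cover u.
    case: l hl hu => // n hl hu.
    have hn : (n < k)%N by lia.
    exists (Wl k n.+1) => //; apply/imsetP; by exists (Ordinal hn).
  + apply/finset.trivIsetP => A B /imsetP[l _ ->] /imsetP[l' _ ->] hne.
    rewrite -finset.setI_eq0; apply/eqP/setP => u; rewrite finset.in_setI finset.in_set0; apply/negP => /andP[h1 h2].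
    have hl : (0 < (val l).+1 <= k)%N by apply/andP; split => //; exact: ltn_ord.
    have hl' : (0 < (val l').+1 <= k)%N by apply/andP; split => //; exact: ltn_ord.
    by move: hne; rewrite (W_uniq hl hl' h1 h2) eqxx.
  + apply/imsetP => -[l _ e].
    have [[u hu] _] := good_W (ltn_ord l).
    by move: hu; rewrite -e inE.
- apply/andP; split.
  + rewrite card_gt0; apply/set0Pn; exists (Wl k 1); apply/imsetP.
    have hk0 : (0 < k)%N by lia.
    by exists (Ordinal hk0).
  + apply: leq_trans (leq_imset_card _ _) _.
    rewrite cardT size_enum_ord /=; exact: km_ge3.
- exists 'F_2, 1%N; split => //; split; first by rewrite card_Fp.
  by exists (@Mgen _ (kgic k)); split => //; apply: valid_gen.
- pose T := (\sum_(i < k.-1) <<vl (val i).+1>>)%MS.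
  rewrite /iupm_rank; apply: leq_trans (mxrankS (_ : (_ <= T)%MS)) _.
  + apply/sumsmx_subP => W /imsetP[l _ ->]; rewrite genmxE.
    apply: submx_trans (Mgen_sub _ _) _.
    have -> : vrow 'F_2 (G := kgic k) (Wl k (val l).+1) = vl (val l).+1.
      by apply/rowP => c; rewrite !mxE Yset_W inE.
    case: (ltnP (val l).+1 k) => hl.
    * have hl' : (val l < k.-1)%N by lia.
      by apply: (sumsmx_sup (Ordinal hl')) => //; rewrite genmxE.
    * have e : (val l).+1 = k by apply/eqP; rewrite eqn_leq hl andbT; exact: ltn_ord.
      rewrite e vl_k; apply: summx_sub => i _.
      by apply: (sumsmx_sup i) => //; rewrite genmxE.
  + apply: leq_trans (rank_sums _ _) _.
    have h1 : forall i : 'I_k.-1, (\rank <<vl (val i).+1>> <= 1)%N.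
      by move=> i; rewrite genmxE rank_leq_row.
    apply: (@leq_trans (\sum_(i < k.-1) 1)%N); first by apply: leq_sum => i _; exact: h1.
    by rewrite sum1_card card_ord.
Qed.
End Scheme.

End SD.


Lemma scheme2 : exists P n,
  finset.partition P [set: guser (kgic 2)] /\ (0 < #|P| <= gm (kgic 2))%N /\
  iupm_achievable P n /\ (n <= (2:nat).-1)%N.
Proof.
pose P : {set {set guser (kgic 2)}} := [set [set: guser (kgic 2)]].
have h0 : (0 < km 2)%N by [].
pose u0 : guser (kgic 2) := (Ordinal h0, ord0).
have hgood : good [set: guser (kgic 2)].
  split; first by exists u0; rewrite finset.in_setT.
  move=> u i _ _.
  have e : i = u.1.
    have h1 : (val i < 1)%N by exact: (ltn_ord i).
    have h2 : (val u.1 < 1)%N by exact: (ltn_ord u.1).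
    by apply: val_inj; move: h1 h2; rewrite !ltnS !leqn0 => /eqP -> /eqP ->.
  by rewrite e eqxx /= inE eqxx.
exists P, (iupm_rank P (@Mgen 'F_2 (kgic 2))).
split; [|split; [|split]].
- apply/and3P; split.
  + by rewrite /P finset.cover1.
  + exact: finset.trivIset1.
  + rewrite /P finset.in_set1 eq_sym; apply/set0Pn; exists u0; by rewrite finset.in_setT.
- by rewrite /P finset.cards1.
- exists 'F_2, 1%N; split => //; split; first by rewrite card_Fp.
  exists (@Mgen _ (kgic 2)); split => //; apply: valid_gen.
  by move=> W; rewrite /P finset.in_set1 => /eqP ->.
- rewrite /iupm_rank /P big_set1 genmxE.
  exact: leq_trans (mxrankS (Mgen_sub _ _)) (rank_leq_row _).
Qed.

Lemma scheme k : (2 <= k)%N -> exists P n,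
  finset.partition P [set: guser (kgic k)] /\ (0 < #|P| <= gm (kgic k))%N /\
  iupm_achievable P n /\ (n <= k.-1)%N.
Proof.
move=> hk; have [->|h3] : k = 2 \/ (3 <= k)%N by lia.
- exact: scheme2.
- exact: scheme_gen.
Qed.

Theorem proposition4 (R : realType) (k : nat) :
  (2 <= k)%N -> beta_IUPM R (kgic k) = beta R (kgic k).
Proof.
move=> hk.
have lbI : forall P n, finset.partition P [set: guser (kgic k)] ->
    iupm_achievable P n -> (k.-1 <= n)%N.
  move=> P n hP hA; have [s hs hc] := code_of_iupm hP hA.
  have := lb_code hk hc; by rewrite leq_pmul2r.
have [P [n [hP [hc [hA hn]]]]] := scheme hk.
have en : n = k.-1 by apply/eqP; rewrite eqn_leq hn (lbI _ _ hP hA).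
have -> : beta_IUPM R (kgic k) = ((k.-1)%:R)%R.
  apply: inf_eq.
  - by exists P, n; split; [|split; [|split]] => //; rewrite en.
  - move=> y [P' [n' [hP' [_ [hA' ->]]]]]; rewrite ler_nat; exact: lbI hA'.
apply/esym/inf_eq.
- have [s hs hcode] := code_of_iupm hP hA.
  exists s, (n * s)%N; split => //; split => //.
  rewrite natrM mulfK ?en //; by rewrite pnatr_eq0 -lt0n.
- move=> y [t [r [ht [hcode ->]]]].
  rewrite ler_pdivlMr ?ltr0n // -natrM ler_nat.
  exact: lb_code hk hcode.
Qed.
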